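(* Let $A\in\mathbb{C}^{n\times m}$, $\alpha_1\ge1/\sqrt{n}$, $\alpha_2\ge1/\sqrt{m}$, $B\in\mathbb{C}^{l\times n}$, $b\in\mathbb{R}^l$, $D\in\mathbb{C}^{q\times m}$, $d\in\mathbb{R}^q$, and define $$S_1=\Big\{u\in\mathbb{C}^n:\|u\|\le\alpha_1,\ \operatorname{Re}(u)\ge0,\ \textstyle\sum_{i=1}^n u_i=1,\ \operatorname{Re}(Bu)\le b\Big\},$$ $$S_2=\Big\{v\in\mathbb{C}^m:\|v\|\le\alpha_2,\ \operatorname{Re}(v)\ge0,\ \textstyle\sum_{i=1}^m v_i=1,\ \operatorname{Re}(Dv)\ge d\Big\},$$ and $f(u,v)=\operatorname{Re}(u^HAv)$. Assume (Slater condition) that there exist $u\in S_1$ and $v\in S_2$ for which all the defining inequality constraints of $S_1$ and of $S_2$ hold strictly. Then there exists $(u^\star,v^\star)\in S_1\times S_2$ such that $$f(u,v^\star)\le f(u^\star,v^\star)\le f(u^\star,v)\qquad\forall u\in S_1,\ v\in S_2.$$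
   Context: $\|\cdot\|$ is the Euclidean norm on $\mathbb{C}^k$, $u^H$ is the conjugate transpose, inequalities between real vectors are componentwise, and $\sum_i u_i=1$ is an equality of complex numbers. Player 1 (choosing $u$) maximizes $f$ and player 2 (choosing $v$) minimizes $f$. *)

(* Defs.v *)
From HB Require Import structures.
From mathcomp Require Import all_boot all_order all_algebra.
From mathcomp Require Import complex reals.
Set Implicit Arguments. Unset Strict Implicit. Unset Printing Implicit Defensive.
Import Order.TTheory GRing.Theory Num.Theory.
Local Open Scope ring_scope.

Section Defs.
Variable R : realType.

Definition cnorm k (u : 'cV[R[i]]_k) : R :=
  Num.sqrt (\sum_(i < k) ((complex.Re (u i 0)) ^+ 2 + (complex.Im (u i 0)) ^+ 2)).

Definition ctr p k (u : 'M[R[i]]_(p, k)) : 'M[R[i]]_(k, p) :=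
  (map_mx (@conjc R) u)^T.

Definition payoff n m (A : 'M[R[i]]_(n, m)) (u : 'cV[R[i]]_n) (v : 'cV[R[i]]_m) : R :=
  complex.Re ((ctr u *m A *m v) 0 0).

Definition S1 n l (alpha1 : R) (B : 'M[R[i]]_(l, n)) (b : 'cV[R]_l)
    (u : 'cV[R[i]]_n) : Prop :=
  [/\ cnorm u <= alpha1,
      (forall i, 0 <= complex.Re (u i 0)),
      \sum_(i < n) u i 0 = 1
    & (forall k, complex.Re ((B *m u) k 0) <= b k 0)].

Definition S2 m q (alpha2 : R) (D : 'M[R[i]]_(q, m)) (d : 'cV[R]_q)
    (v : 'cV[R[i]]_m) : Prop :=
  [/\ cnorm v <= alpha2,
      (forall i, 0 <= complex.Re (v i 0)),
      \sum_(i < m) v i 0 = 1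
    & (forall k, d k 0 <= complex.Re ((D *m v) k 0))].

Definition S1_strict n l (alpha1 : R) (B : 'M[R[i]]_(l, n)) (b : 'cV[R]_l)
    (u : 'cV[R[i]]_n) : Prop :=
  [/\ cnorm u < alpha1,
      (forall i, 0 < complex.Re (u i 0)),
      \sum_(i < n) u i 0 = 1
    & (forall k, complex.Re ((B *m u) k 0) < b k 0)].

Definition S2_strict m q (alpha2 : R) (D : 'M[R[i]]_(q, m)) (d : 'cV[R]_q)
    (v : 'cV[R[i]]_m) : Prop :=
  [/\ cnorm v < alpha2,
      (forall i, 0 < complex.Re (v i 0)),
      \sum_(i < m) v i 0 = 1
    & (forall k, d k 0 < complex.Re ((D *m v) k 0))].
End Defs.

(* Main.v *)
Require Import Defs.
From HB Require Import structures.
From mathcomp Require Import all_boot all_order all_algebra.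
From mathcomp Require Import complex reals.
From mathcomp Require Import classical_sets boolp topology normedtype derive.
From mathcomp Require Import ring lra finmap.
Import Order.TTheory GRing.Theory Num.Theory.
Import numFieldNormedType.Exports.
Local Open Scope ring_scope.

Section Abs.
Variable R : realType.

Definition pos (t : R) := (t + `|t|) / 2.

Lemma posP t : (0 <= t /\ pos t = t) \/ (t < 0 /\ pos t = 0).
Proof.
rewrite /pos; case: (leP 0 t) => h.
  by left; split => //; rewrite ger0_norm //; field.
by right; split => //; rewrite ltr0_norm // subrr mul0r.
Qed.

Lemma pos_ge0 t : 0 <= pos t.
Proof. by case: (posP t) => -[h ->] //; lra. Qed.

Lemma q_ineq c u d : pos (c - (u + d)) * pos (c - (u + d)) <=
   pos (c - u) * pos (c - u) - 2 * pos (c - u) * d + d * d.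
Proof.
case: (posP (c - u)) => -[h1 ->]; case: (posP (c - (u + d))) => -[h2 ->]; nra.
Qed.

Lemma pos_continuous : continuous pos.
Proof.
move=> x; rewrite /pos.
have := (continuousM (s := fun t : R => t + `|t|) (t := fun _ : R => (2:R)^-1) (x:=x)).
apply.
apply: continuousD; first exact: cvg_id.
exact: norm_continuous.
exact: cst_continuous.
Qed.

Lemma cont_sum_seq (T : topologicalType) (I : Type) (r : seq I) (g : I -> T -> R) :
  (forall i, continuous (g i)) -> continuous (fun x => \sum_(i <- r) g i x).
Proof.
move=> hg; elim: r => [|i r IH].
  by under eq_fun do rewrite big_nil; exact: cst_continuous.
under eq_fun do rewrite big_cons.
by move=> x; apply: continuousD; [exact: hg | exact: IH].
Qed.

Definition convexR {N} (X : set 'rV[R]_N) := forall x1 x2, X x1 -> X x2 ->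
  forall s : R, 0 <= s -> s <= 1 -> X (x1 + s *: (x2 - x1)).

Lemma le_sum_seq_elem (I : eqType) (r : seq I) (F : I -> R) i0 :
  (forall i, 0 <= F i) -> i0 \in r -> F i0 <= \sum_(i <- r) F i.
Proof.
move=> h; elim: r => [//|j r IH]; rewrite inE big_cons => /orP[/eqP ->|ir].
  by rewrite lerDl; apply: sumr_ge0 => i _.
by rewrite (le_trans (IH ir)) // lerDr.
Qed.

Lemma comb M (Y : set 'rV[R]_M) (T : Type) (f : T -> 'rV[R]_M -> R) :
  convexR Y ->
  (forall x y1 y2 s, f x (y1 + s *: (y2 - y1)) = f x y1 + s * (f x y2 - f x y1)) ->
  forall s : seq (R * 'rV[R]_M), (forall p, p \in s -> 0 <= p.1 /\ Y p.2) ->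
  0 < \sum_(p <- s) p.1 ->
  exists2 y, Y y & forall x, (\sum_(p <- s) p.1) * f x y = \sum_(p <- s) p.1 * f x p.2.
Proof.
move=> cY fa; elim=> [|p s IH] hs; first by rewrite big_nil ltxx.
have [hp1 hp2] := hs p (mem_head _ _).
have hs' : forall q, q \in s -> 0 <= q.1 /\ Y q.2.
  by move=> q qs; apply: hs; rewrite inE qs orbT.
have W'ge0 : 0 <= \sum_(q <- s) q.1.
  by rewrite big_seq; apply: sumr_ge0 => q /hs' [].
rewrite !big_cons => Wgt0.
case: (eqVneq (\sum_(q <- s) q.1) 0) => [W0|W'n0].
- exists p.2 => // x.
  have z : \sum_(q <- s) q.1 * f x q.2 = 0.
    move/eqP: W0; rewrite big_seq psumr_eq0; last by move=> q /hs' [].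
    move/allP => hall; rewrite big_seq big1 // => q qs.
    by move: (hall q qs); rewrite qs /= => /eqP ->; rewrite mul0r.
  by rewrite W0 addr0 big_cons z addr0.
- have W'gt0 : 0 < \sum_(q <- s) q.1 by rewrite lt_def W'n0.
  have [y' Yy' hy'] := IH hs' W'gt0.
  set W' := \sum_(q <- s) q.1 in W'gt0 hy' *.
  have Wn0 : p.1 + W' != 0 by rewrite gt_eqF.
  exists (y' + (p.1 / (p.1 + W')) *: (p.2 - y')).
    apply: cY => //; first by rewrite divr_ge0 // ltW.
    by rewrite ler_pdivrMr // mul1r lerDl ltW.
  move=> x; rewrite big_cons fa -hy'; field => //.
Qed.

Lemma FV N M (X : set 'rV[R]_N) (Y : set 'rV[R]_M) (f : 'rV[R]_N -> 'rV[R]_M -> R)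
    (c : R) (ys : seq 'rV[R]_M) :
  compact X -> (X !=set0)%classic -> convexR X -> convexR Y ->
  (forall y, continuous (f^~ y)) ->
  (forall x1 x2 y s, f (x1 + s *: (x2 - x1)) y = f x1 y + s * (f x2 y - f x1 y)) ->
  (forall x y1 y2 s, f x (y1 + s *: (y2 - y1)) = f x y1 + s * (f x y2 - f x y1)) ->
  (forall y, y \in ys -> Y y) ->
  (forall x, X x -> exists2 y, y \in ys & f x y < c) ->
  exists2 y, Y y & forall x, X x -> f x y < c.
Proof.
move=> cX X0 cvX cvY fc fax fay ysY hx.
pose Dfun x := \sum_(y <- ys) pos (c - f x y) * pos (c - f x y).
have Dc : continuous Dfun.
  apply: cont_sum_seq => y x.
  have h1 : {for x, continuous (fun x => pos (c - f x y))}.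
    apply: (continuous_comp (f := fun x => c - f x y) (g := pos)).
      by apply: continuousB; [exact: cst_continuous | exact: fc].
    exact: pos_continuous.
  exact: (continuousM (s := fun x => pos (c - f x y)) (t := fun x => pos (c - f x y))).
have [x0 x0X x0min] := EVT_min_rV X0 cX (continuous_subspaceT Dc).
rewrite in_setE in x0X.
pose a y := pos (c - f x0 y).
have key : forall x, X x -> \sum_(y <- ys) a y * (f x y - f x0 y) <= 0.
  move=> x Xx; set S := \sum_(y <- ys) _.
  set K := \sum_(y <- ys) (f x y - f x0 y) * (f x y - f x0 y).
  have K0 : 0 <= K by apply: sumr_ge0 => y _; rewrite -expr2; exact: sqr_ge0.
  rewrite leNgt; apply/negP => S0.
  set s := S / (S + K).
  have SK0 : 0 < S + K by lra.
  have hs : s * (S + K) = S by rewrite /s divfK // gt_eqF.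
  have s0 : 0 < s by rewrite divr_gt0.
  have s1 : s <= 1 by rewrite ler_pdivrMr // mul1r lerDl.
  have Xs := cvX _ _ x0X Xx s (ltW s0) s1.
  have h1 : Dfun x0 <= Dfun (x0 + s *: (x - x0)) by apply: x0min; rewrite in_setE.
  have h2 : Dfun (x0 + s *: (x - x0)) <= Dfun x0 - 2 * s * S + (s * s) * K.
    rewrite /Dfun.
    under eq_bigr do rewrite fax.
    apply: le_trans.
      apply: ler_sum => y _; exact: q_ineq.
    rewrite big_split /= sumrB /S /K !mulr_sumr.
    rewrite le_eqVlt; apply/orP; left; apply/eqP; congr (_ - _ + _); apply: eq_bigr => y _; rewrite /a; ring.
  have h3 : 2 * s * S <= s * s * K by lra.
  have hK : s * K = S - s * S by rewrite -{1}hs; ring.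
  have h4 : s * s * K = s * (S - s * S) by rewrite -hK; ring.
  have h5 := mulr_gt0 s0 S0.
  have h6 := mulr_gt0 s0 h5.
  rewrite h4 in h3; lra.
have [y0 y0ys fy0] := hx x0 x0X.
have ay0 : 0 < a y0.
  by rewrite /a; case: (posP (c - f x0 y0)) => -[h ->]; lra.
pose pairs := [seq (a y, y) | y <- ys].
have hW : \sum_(p <- pairs) p.1 = \sum_(y <- ys) a y by rewrite big_map.
have Wgt0 : 0 < \sum_(y <- ys) a y.
  apply: lt_le_trans ay0 _; apply: le_sum_seq_elem => // y; exact: pos_ge0.
have hp : forall p, p \in pairs -> 0 <= p.1 /\ Y p.2.
  by move=> p /mapP [y yys ->] /=; split; [exact: pos_ge0 | exact: ysY].
have Wp : 0 < \sum_(p <- pairs) p.1 by rewrite hW.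
have [ys' Yys' hys'] := @comb _ _ _ _ cvY fay _ hp Wp.
exists ys' => // x Xx.
have e1 := hys' x; rewrite hW big_map /= in e1.
have k := key x Xx.
have e2 : \sum_(y <- ys) a y * (c - f x0 y) = \sum_(y <- ys) a y * a y.
  apply: eq_bigr => y _; rewrite /a.
  by case: (posP (c - f x0 y)) => -[h ->]; rewrite ?mul0r.
have e3 : a y0 * a y0 <= \sum_(y <- ys) a y * a y.
  have := @le_sum_seq_elem _ ys (fun y => a y * a y) y0. apply => // y. apply: mulr_ge0; exact: pos_ge0.
have e4 : \sum_(y <- ys) a y * (c - f x0 y) =
    c * \sum_(y <- ys) a y - \sum_(y <- ys) a y * f x0 y.
  by rewrite mulr_sumr -sumrB; apply: eq_bigr => y _; ring.
have e5 : \sum_(y <- ys) a y * (f x y - f x0 y) =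
    \sum_(y <- ys) a y * f x y - \sum_(y <- ys) a y * f x0 y.
  by rewrite -sumrB; apply: eq_bigr => y _; ring.
have : (\sum_(y <- ys) a y) * f x ys' < (\sum_(y <- ys) a y) * c.
  nra.
by rewrite ltr_pM2l.
Qed.


Lemma MM N M (X : set 'rV[R]_N) (Y : set 'rV[R]_M) (f : 'rV[R]_N -> 'rV[R]_M -> R)
    (c : R) :
  compact X -> (X !=set0)%classic -> convexR X -> convexR Y ->
  (forall y, continuous (f^~ y)) ->
  (forall x1 x2 y s, f (x1 + s *: (x2 - x1)) y = f x1 y + s * (f x2 y - f x1 y)) ->
  (forall x y1 y2 s, f x (y1 + s *: (y2 - y1)) = f x y1 + s * (f x y2 - f x y1)) ->
  (forall x, X x -> exists2 y, Y y & f x y < c) ->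
  exists2 y, Y y & forall x, X x -> f x y < c.
Proof.
move=> cX X0 cvX cvY fc fax fay hx.
have : cover_compact X by rewrite -compact_cover.
move=> /(_ _ Y (fun y => [set x | f x y < c]%classic)) [].
- move=> y _.
  apply: (@open_comp _ _ (f^~ y) [set t | t < c]%classic); last exact: open_lt.
  move=> x _; exact: fc.
- move=> x Xx; have [y Yy fy] := hx x Xx; by exists y.
- move=> D' D'Y Xcov.
  apply: (@FV N M X Y f c (enum_fset D')) => //.
    by move=> y yD; rewrite -in_setE; apply: D'Y.
Qed.

Lemma saddle N M (X : set 'rV[R]_N) (Y : set 'rV[R]_M) (f : 'rV[R]_N -> 'rV[R]_M -> R) :
  compact X -> compact Y -> (X !=set0)%classic -> (Y !=set0)%classic ->
  convexR X -> convexR Y ->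
  (forall y, continuous (f^~ y)) -> (forall x, continuous (f x)) ->
  (forall x1 x2 y s, f (x1 + s *: (x2 - x1)) y = f x1 y + s * (f x2 y - f x1 y)) ->
  (forall x y1 y2 s, f x (y1 + s *: (y2 - y1)) = f x y1 + s * (f x y2 - f x y1)) ->
  exists x0, exists y0, [/\ X x0, Y y0 & forall x y, X x -> Y y ->
     f x y0 <= f x0 y0 /\ f x0 y0 <= f x0 y].
Proof.
move=> cX cY X0 Y0 cvX cvY fc1 fc2 fax fay.
pose E := [set c : R | exists2 x, X x & forall y, Y y -> c <= f x y]%classic.
have [xa Xxa] := X0; have [ya Yya] := Y0.
have [ym ymY ymmin] := EVT_min_rV Y0 cY (continuous_subspaceT (fc2 xa)).
have [xM xMX xMmax] := EVT_max_rV X0 cX (continuous_subspaceT (fc1 ya)).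
have hE : has_sup E.
  split.
    exists (f xa ym); exists xa => // y Yy; by apply: ymmin; rewrite in_setE.
  exists (f xM ya) => c; rewrite /E /= => -[x Xx hc]; apply: le_trans (hc ya Yya) _.
  by apply: xMmax; rewrite in_setE.
set v := sup E.
have [xs Xxs hxs] : exists2 x, X x & forall y, Y y -> v <= f x y.
  have [//|nex] := pselect (exists2 x, X x & forall y, Y y -> v <= f x y).
  have h : forall x, X x -> exists2 y, Y y & f x y < v.
    move=> x Xx; have [//|nh] := pselect (exists2 y, Y y & f x y < v).
    exfalso; apply: nex; exists x => // y Yy; rewrite leNgt; apply/negP => lt.
    by apply: nh; exists y.
  have [y1 Yy1 hy1] := @MM N M X Y f v cX X0 cvX cvY fc1 fax fay h.
  have [x1 x1X x1max] := EVT_max_rV X0 cX (continuous_subspaceT (fc1 y1)).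
  rewrite in_setE in x1X.
  have lt1 : f x1 y1 < v by apply: hy1.
  have lt1' : 0 < v - f x1 y1 by rewrite subr_gt0.
  have [e [x Xx hxe] lte] := @sup_adherent _ E (v - f x1 y1) lt1' hE.
  have := hxe y1 Yy1.
  have : f x y1 <= f x1 y1 by apply: x1max; rewrite in_setE.
  move: lte; rewrite /v; lra.
have [ys Yys hys] : exists2 y, Y y & forall x, X x -> f x y <= v.
  have [//|nex] := pselect (exists2 y, Y y & forall x, X x -> f x y <= v).
  have h : forall y, Y y -> exists2 x, X x & (fun y x => - f x y) y x < - v.
    move=> y Yy; have [//|nh] := pselect (exists2 x, X x & - f x y < - v).
    exfalso; apply: nex; exists y => // x Xx; rewrite leNgt; apply/negP => lt.
    by apply: nh; exists x => //; rewrite ltrN2.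
  have faxN : forall y1 y2 x s, - f x (y1 + s *: (y2 - y1)) = - f x y1 + s * (- f x y2 - - f x y1).
    by move=> *; rewrite fay; ring.
  have fayN : forall y x1 x2 s, - f (x1 + s *: (x2 - x1)) y = - f x1 y + s * (- f x2 y - - f x1 y).
    by move=> *; rewrite fax; ring.
  have [x2 Xx2 hx2] := @MM M N Y X (fun y x => - f x y) (- v) cY Y0 cvY cvX
     (fun x z => continuousN (fc2 x z)) faxN fayN h.
  have [y2 y2Y y2min] := EVT_min_rV Y0 cY (continuous_subspaceT (fc2 x2)).
  rewrite in_setE in y2Y.
  have lt2 : v < f x2 y2 by rewrite -ltrN2; apply: hx2.
  have : E (f x2 y2).
    by exists x2 => // y Yy; apply: y2min; rewrite in_setE.
  move=> /(@sup_upper_bound _ E hE); rewrite -/v; lra.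
exists xs, ys; split => // x y Xx Yy; split.
  by apply: le_trans (hys x Xx) (hxs ys Yys).
by apply: le_trans (hys xs Xxs) (hxs y Yy).
Qed.

End Abs.

Section Conc.
Variable R : realType.
Local Notation C := (R[i]).

Definition cx {n} (p : 'rV[R]_(n + n)) : 'cV[C]_n :=
  \col_i (Complex (p 0 (lshift n i)) (p 0 (rshift n i))).
Definition rx {n} (u : 'cV[C]_n) : 'rV[R]_(n + n) :=
  row_mx (\row_i complex.Re (u i 0)) (\row_i complex.Im (u i 0)).

Lemma cx_rx n (u : 'cV[C]_n) : cx (rx u) = u.
Proof.
apply/matrixP => i j; rewrite /cx mxE row_mxEl row_mxEr !mxE (ord1 j).
by case: (u i 0).
Qed.

Lemma cxC n (p p' : 'rV[R]_(n + n)) s :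
  cx (p + s *: (p' - p)) = cx p + (s%:C)%C *: (cx p' - cx p).
Proof.
apply/matrixP => i j; rewrite !mxE /=.
apply/eqP; rewrite eq_complex /=; apply/andP; split; apply/eqP; ring.
Qed.

Lemma ReD (a b : C) : complex.Re (a + b) = complex.Re a + complex.Re b.
Proof. by case: a; case: b. Qed.
Lemma ImD (a b : C) : complex.Im (a + b) = complex.Im a + complex.Im b.
Proof. by case: a; case: b. Qed.

Lemma Re_sum (I : Type) (r : seq I) (F : I -> C) :
  complex.Re (\sum_(i <- r) F i) = \sum_(i <- r) complex.Re (F i).
Proof. by elim: r => [|x r IH]; rewrite ?big_nil ?big_cons // ReD IH. Qed.
Lemma Im_sum (I : Type) (r : seq I) (F : I -> C) :
  complex.Im (\sum_(i <- r) F i) = \sum_(i <- r) complex.Im (F i).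
Proof. by elim: r => [|x r IH]; rewrite ?big_nil ?big_cons // ImD IH. Qed.

Lemma ReC (a b : C) (s : R) :
  complex.Re (a + (s%:C)%C * (b - a)) = complex.Re a + s * (complex.Re b - complex.Re a).
Proof. case: a => a1 a2; case: b => b1 b2 /=; ring. Qed.
Lemma ImC (a b : C) (s : R) :
  complex.Im (a + (s%:C)%C * (b - a)) = complex.Im a + s * (complex.Im b - complex.Im a).
Proof. case: a => a1 a2; case: b => b1 b2 /=; ring. Qed.


Definition sq {n} (u : 'cV[C]_n) : R :=
  \sum_(i < n) ((complex.Re (u i 0)) ^+ 2 + (complex.Im (u i 0)) ^+ 2).

Lemma sq_ge0 n (u : 'cV[C]_n) : 0 <= sq u.
Proof. by apply: sumr_ge0 => i _; apply: addr_ge0; apply: sqr_ge0. Qed.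

Lemma cnorm_le n (u : 'cV[C]_n) a : (cnorm u <= a) <-> (0 <= a /\ sq u <= a ^+ 2).
Proof.
have h0 := sq_ge0 _ u.
have e : cnorm u = Num.sqrt (sq u) by [].
rewrite e; split.
  move=> h; have s0 := sqrtr_ge0 (sq u).
  have s2 := sqr_sqrtr h0.
  split; first exact: le_trans s0 h.
  rewrite -s2; apply: lerXn2r => //; rewrite nnegrE //; exact: le_trans s0 h.
move=> [a0 h]; apply: le_trans (ler_wsqrtr h) _.
by rewrite sqrtr_sqr ger0_norm.
Qed.

Lemma S1_conv n l a (B : 'M[C]_(l, n)) b (u u' : 'cV[C]_n) s :
  S1 a B b u -> S1 a B b u' -> 0 <= s -> s <= 1 ->
  S1 a B b (u + (s%:C)%C *: (u' - u)).
Proof.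
case=> n1 r1 s1 b1; case=> n2 r2 s2 b2 hs0 hs1.
have E i : (u + (s%:C)%C *: (u' - u)) i 0 = u i 0 + (s%:C)%C * (u' i 0 - u i 0).
  by rewrite !mxE.
split.
- move/cnorm_le: n1 => [a0 q1]; move/cnorm_le: n2 => [_ q2]; apply/cnorm_le; split => //.
  rewrite /sq; under eq_bigr do rewrite E ReC ImC.
  apply: le_trans.
    apply: (@ler_sum _ _ _ _ _ (fun i => (1 - s) * ((complex.Re (u i 0)) ^+ 2 + (complex.Im (u i 0)) ^+ 2) + s * ((complex.Re (u' i 0)) ^+ 2 + (complex.Im (u' i 0)) ^+ 2))).
    move=> i _.
    set x := complex.Re (u i 0); set y := complex.Re (u' i 0).
    set z := complex.Im (u i 0); set w := complex.Im (u' i 0).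
    have h1s : 0 <= 1 - s by lra.
    have h := mulr_ge0 (mulr_ge0 hs0 h1s) (addr_ge0 (sqr_ge0 (x - y)) (sqr_ge0 (z - w))).
    nra.
  rewrite big_split /= -!mulr_sumr -/(sq u) -/(sq u').
  nra.
- move=> i; rewrite E ReC; have := r1 i; have := r2 i; nra.
- rewrite (eq_bigr _ (fun i _ => E i)) big_split /= -mulr_sumr sumrB s1 s2 subrr mulr0 addr0 //.
- move=> k.
  have -> : (B *m (u + (s%:C)%C *: (u' - u))) k 0 =
      (B *m u) k 0 + (s%:C)%C * ((B *m u') k 0 - (B *m u) k 0).
    by rewrite mulmxDr -scalemxAr mulmxBr !mxE.
  rewrite ReC; have := b1 k; have := b2 k; nra.
Qed.

Definition Xset {n l} (a : R) (B : 'M[C]_(l, n)) (b : 'cV[R]_l) : set 'rV[R]_(n + n) :=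
  [set p | S1 a B b (cx p)]%classic.

Lemma Xconv n l a (B : 'M[C]_(l, n)) b : convexR R (Xset a B b).
Proof.
move=> p p' Sp Sp' s h0 h1; rewrite /Xset /= cxC; exact: S1_conv.
Qed.


Lemma contM2 N (f g : 'rV[R]_N -> R) : continuous f -> continuous g ->
  continuous (fun p => f p * g p).
Proof. by move=> hf hg x; exact: (continuousM (s:=f) (t:=g) (hf x) (hg x)). Qed.
Lemma contD2 N (f g : 'rV[R]_N -> R) : continuous f -> continuous g ->
  continuous (fun p => f p + g p).
Proof. by move=> hf hg x; exact: (continuousD (hf x) (hg x)). Qed.
Lemma contB2 N (f g : 'rV[R]_N -> R) : continuous f -> continuous g ->
  continuous (fun p => f p - g p).
Proof. by move=> hf hg x; exact: (continuousB (hf x) (hg x)). Qed.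
Lemma contC N (c : R) : continuous (fun p : 'rV[R]_N => c).
Proof. exact: cst_continuous. Qed.
Lemma contP N (j : 'I_N) : continuous (fun p : 'rV[R]_N => p 0 j).
Proof. exact: coord_continuous. Qed.

Lemma Re_cx n (p : 'rV[R]_(n + n)) i : complex.Re (cx p i 0) = p 0 (lshift n i).
Proof. by rewrite mxE. Qed.
Lemma Im_cx n (p : 'rV[R]_(n + n)) i : complex.Im (cx p i 0) = p 0 (rshift n i).
Proof. by rewrite mxE. Qed.

Lemma ReB_cx n l (B : 'M[C]_(l, n)) (p : 'rV[R]_(n + n)) k :
  complex.Re ((B *m cx p) k 0) = \sum_(j < n) (complex.Re (B k j) * p 0 (lshift n j)
      - complex.Im (B k j) * p 0 (rshift n j)).
Proof.
rewrite mxE Re_sum; apply: eq_bigr => j _; rewrite mxE /=.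
by case: (B k j) => x y /=; ring.
Qed.

Lemma closed_le_fun N (g : 'rV[R]_N -> R) c : continuous g ->
  closed [set p | g p <= c]%classic.
Proof.
move=> hg; apply: (@preimage_closed _ _ g [set x | x <= c]%classic).
  by move=> x _; exact: hg.
exact: closed_le.
Qed.
Lemma closed_eq_fun N (g : 'rV[R]_N -> R) c : continuous g ->
  closed [set p | g p = c]%classic.
Proof.
move=> hg; apply: (@preimage_closed _ _ g [set x | x = c]%classic).
  by move=> x _; exact: hg.
exact: closed_eq.
Qed.

Lemma sq_cx n (p : 'rV[R]_(n + n)) :
  sq (cx p) = \sum_(i < n) (p 0 (lshift n i) * p 0 (lshift n i) + p 0 (rshift n i) * p 0 (rshift n i)).
Proof. by apply: eq_bigr => i _; rewrite Re_cx Im_cx !expr2. Qed.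

Lemma sum_cx1 n (p : 'rV[R]_(n + n)) :
  (\sum_(i < n) cx p i 0 = 1) <->
  (\sum_(i < n) p 0 (lshift n i) = 1 /\ \sum_(i < n) p 0 (rshift n i) = 0).
Proof.
split.
  move=> h; split.
    have e := congr1 (@complex.Re R) h; rewrite Re_sum /= in e; apply: (etrans _ e).
    by apply: eq_bigr => i _; rewrite Re_cx.
  have e := congr1 (@complex.Im R) h; rewrite Im_sum /= in e; apply: (etrans _ e).
  by apply: eq_bigr => i _; rewrite Im_cx.
move=> [h1 h2]; apply/eqP; rewrite eq_complex Re_sum Im_sum.
under eq_bigr do rewrite Re_cx; under [X in _ && (X == _)]eq_bigr do rewrite Im_cx.
by rewrite h1 h2 /= !eqxx.
Qed.

Lemma Xclosed n l a (B : 'M[C]_(l, n)) b : 0 <= a -> closed (Xset a B b).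
Proof.
move=> a0.
have -> : Xset a B b =
  ([set p | sq (cx p) <= a ^+ 2] `&` \bigcap_(i in setT) [set p | 0 <= p 0 (lshift n i)]
   `&` [set p | \sum_(i < n) p 0 (lshift n i) = 1] `&` [set p | \sum_(i < n) p 0 (rshift n i) = 0]
   `&` \bigcap_(k in setT) [set p | complex.Re ((B *m cx p) k 0) <= b k 0])%classic.
  apply/seteqP; split => p /=.
  - case=> h1 h2 /sum_cx1 [h3 h3'] h4; move/cnorm_le: h1 => [_ h1].
    split; [split; [split; [split|] |] |] => //.
    + by move=> i _ /=; move: (h2 i); rewrite Re_cx.
    + by move=> k _ /=; apply: h4.
  - move=> [[[[h1 h2] h3] h3'] h4]; split.
    + by apply/cnorm_le.
    + by move=> i; rewrite Re_cx; apply: h2.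
    + by apply/sum_cx1.
    + by move=> k; apply: h4.
apply: closedI; [apply: closedI; [apply: closedI; [apply: closedI|]|]|].
- apply: closed_le_fun.
  have -> : (fun p : 'rV[R]_(n + n) => sq (cx p)) = (fun p => \sum_(i < n) (p 0 (lshift n i) * p 0 (lshift n i) + p 0 (rshift n i) * p 0 (rshift n i))).
    by apply/funext => p; rewrite sq_cx.
  apply: cont_sum_seq => i; apply: contD2; apply: contM2; exact: contP.
- apply: closed_bigI => i _; apply: (@preimage_closed _ _ (fun p : 'rV[R]_(n + n) => p 0 (lshift n i)) [set x | 0 <= x]%classic).
    by move=> x _; exact: contP.
  exact: closed_ge.
- apply: closed_eq_fun; apply: cont_sum_seq => i; exact: contP.
- apply: closed_eq_fun; apply: cont_sum_seq => i; exact: contP.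
- apply: closed_bigI => k _; apply: closed_le_fun.
  have -> : (fun p : 'rV[R]_(n + n) => complex.Re ((B *m cx p) k 0)) = (fun p => \sum_(j < n) (complex.Re (B k j) * p 0 (lshift n j)
      - complex.Im (B k j) * p 0 (rshift n j))).
    by apply/funext => p; rewrite ReB_cx.
  apply: cont_sum_seq => j; apply: contB2; apply: contM2; (exact: contC || exact: contP).
Qed.

Lemma Xbounded n l a (B : 'M[C]_(l, n)) b p : Xset a B b p -> forall j, `|p 0 j| <= a.
Proof.
move=> [h1 _ _ _] j; move/cnorm_le: h1 => [a0 h1].
have key : p 0 j ^+ 2 <= sq (cx p).
  have hF : forall i, 0 <= complex.Re (cx p i 0) ^+ 2 + complex.Im (cx p i 0) ^+ 2.
    by move=> i; apply: addr_ge0; apply: sqr_ge0.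
  case: (split_ordP j) => i ->.
    have := @le_sum_seq_elem R _ (index_enum 'I_n) (fun i => complex.Re (cx p i 0) ^+ 2 + complex.Im (cx p i 0) ^+ 2) i hF (mem_index_enum i).
    rewrite Re_cx => h; apply: le_trans h; rewrite lerDl; exact: sqr_ge0.
  have := @le_sum_seq_elem R _ (index_enum 'I_n) (fun i => complex.Re (cx p i 0) ^+ 2 + complex.Im (cx p i 0) ^+ 2) i hF (mem_index_enum i).
  rewrite Im_cx => h; apply: le_trans h; rewrite lerDr; exact: sqr_ge0.
have k2 := le_trans key h1.
case: (leP 0 (p 0 j)) => h; [rewrite ger0_norm | rewrite ltr0_norm]; nra.
Qed.

Lemma Xcompact n l a (B : 'M[C]_(l, n)) b : 0 <= a -> compact (Xset a B b).
Proof.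
move=> a0; apply: bounded_closed_compact; last exact: Xclosed.
exists a; split; first by rewrite num_real.
move=> M hM p Xp /=.
apply: le_trans (ltW hM).
have -> : `|p| = mx_norm p by []. rewrite mx_normrE.
apply: bigmax_le => // -[i j] _ /=.
rewrite (ord1 i); exact: Xbounded Xp j.
Qed.


Definition G {n m} (A : 'M[C]_(n, m)) (p : 'rV[R]_(n + n)) (r : 'rV[R]_(m + m)) : R :=
  \sum_(i < n) \sum_(j < m)
    (p 0 (lshift n i) * (complex.Re (A i j) * r 0 (lshift m j) - complex.Im (A i j) * r 0 (rshift m j))
     + p 0 (rshift n i) * (complex.Im (A i j) * r 0 (lshift m j) + complex.Re (A i j) * r 0 (rshift m j))).

Lemma payoffG n m (A : 'M[C]_(n, m)) p r : payoff A (cx p) (cx r) = G A p r.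
Proof.
rewrite /payoff mxE Re_sum.
under eq_bigr do rewrite mxE mulr_suml Re_sum.
rewrite exchange_big /=; apply: eq_bigr => i _; apply: eq_bigr => j _.
rewrite !mxE /=.
by case: (A i j) => x y /=; ring.
Qed.

Lemma sum_aff (I : Type) (r : seq I) (F F1 F2 : I -> R) s :
  (forall i, F i = F1 i + s * (F2 i - F1 i)) ->
  \sum_(i <- r) F i = \sum_(i <- r) F1 i + s * (\sum_(i <- r) F2 i - \sum_(i <- r) F1 i).
Proof. by move=> h; rewrite (eq_bigr _ (fun i _ => h i)) big_split /= -mulr_sumr sumrB. Qed.

Lemma Gx n m (A : 'M[C]_(n, m)) p p' r s :
  G A (p + s *: (p' - p)) r = G A p r + s * (G A p' r - G A p r).
Proof.
rewrite /G; apply: sum_aff => i; apply: sum_aff => j; rewrite !mxE; ring.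
Qed.

Lemma Gy n m (A : 'M[C]_(n, m)) p r r' s :
  G A p (r + s *: (r' - r)) = G A p r + s * (G A p r' - G A p r).
Proof.
rewrite /G; apply: sum_aff => i; apply: sum_aff => j; rewrite !mxE; ring.
Qed.

Lemma Gc1 n m (A : 'M[C]_(n, m)) r : continuous (fun p => G A p r).
Proof.
rewrite /G; apply: cont_sum_seq => i; apply: cont_sum_seq => j.
repeat first [exact: contP | exact: contC | apply: contB2 | apply: contD2 | apply: contM2].
Qed.

Lemma Gc2 n m (A : 'M[C]_(n, m)) p : continuous (G A p).
Proof.
rewrite /G; apply: cont_sum_seq => i; apply: cont_sum_seq => j.
repeat first [exact: contP | exact: contC | apply: contB2 | apply: contD2 | apply: contM2].
Qed.

End Conc.


Section Main.
Variable R : realType.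

Lemma ReN (z : R[i]) : complex.Re (- z) = - complex.Re z.
Proof. by case: z. Qed.

Lemma S2_S1 n q a (D : 'M[R[i]]_(q, n)) (d : 'cV[R]_q) v :
  S2 a D d v <-> S1 a (- D) (- d) v.
Proof.
have E k : (- D *m v) k 0 = - (D *m v) k 0 by rewrite mulNmx !mxE.
have F k : (- d) k 0 = - d k 0 by rewrite !mxE.
split; case=> h1 h2 h3 h4; split => // k.
  by rewrite E F ReN lerN2.
by move: (h4 k); rewrite E F ReN lerN2.
Qed.

Lemma theorem4_aux (n m l q : nat)
  (A : 'M[R[i]]_(n, m)) (alpha1 alpha2 : R)
  (B : 'M[R[i]]_(l, n)) (b : 'cV[R]_l)
  (D : 'M[R[i]]_(q, m)) (d : 'cV[R]_q) :
  1 / Num.sqrt (n%:R) <= alpha1 ->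
  1 / Num.sqrt (m%:R) <= alpha2 ->
  (exists u, S1_strict alpha1 B b u) ->
  (exists v, S2_strict alpha2 D d v) ->
  exists ustar vstar,
    [/\ S1 alpha1 B b ustar, S2 alpha2 D d vstar
      & forall u v, S1 alpha1 B b u -> S2 alpha2 D d v ->
          payoff A u vstar <= payoff A ustar vstar /\
          payoff A ustar vstar <= payoff A ustar v].
Proof.
move=> _ _ [u0 hu0] [v0 hv0].
have Su0 : S1 alpha1 B b u0.
  by case: hu0 => h1 h2 h3 h4; split => // [|i|k]; apply: ltW.
have Sv0 : S1 alpha2 (- D) (- d) v0.
  apply/S2_S1; by case: hv0 => h1 h2 h3 h4; split => // [|i|k]; apply: ltW.
have a1 : 0 <= alpha1 by case: Su0 => /cnorm_le [].
have a2 : 0 <= alpha2 by case: Sv0 => /cnorm_le [].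
have X0 : (Xset R alpha1 B b !=set0)%classic.
  by exists (rx R u0); rewrite /Xset /= cx_rx.
have Y0 : (Xset R alpha2 (- D) (- d) !=set0)%classic.
  by exists (rx R v0); rewrite /Xset /= cx_rx.
pose X := Xset R alpha1 B b.
pose Y := Xset R alpha2 (- D) (- d).
pose f := G R A.
have cX : compact X := Xcompact R _ _ _ B b a1.
have cY : compact Y := Xcompact R _ _ _ (- D) (- d) a2.
have cvX : convexR R X := Xconv R _ _ alpha1 B b.
have cvY : convexR R Y := Xconv R _ _ alpha2 (- D) (- d).
have fc1 : forall y, continuous (f^~ y) := fun y => Gc1 R _ _ A y.
have fc2 : forall x, continuous (f x) := fun x => Gc2 R _ _ A x.
have fax : forall x1 x2 y s, f (x1 + s *: (x2 - x1)) y = f x1 y + s * (f x2 y - f x1 y).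
  by move=> *; apply: Gx.
have fay : forall x y1 y2 s, f x (y1 + s *: (y2 - y1)) = f x y1 + s * (f x y2 - f x y1).
  by move=> *; apply: Gy.
have [x0 [y0 [Xx0 Yy0 H]]] := @saddle R _ _ X Y f cX cY X0 Y0 cvX cvY fc1 fc2 fax fay.
exists (cx R x0), (cx R y0); split => //.
  by apply/S2_S1.
move=> u v Su Sv.
have Xu : X (rx R u) by rewrite /X /Xset /= cx_rx.
have Yv : Y (rx R v) by rewrite /Y /Xset /= cx_rx; apply/S2_S1.
have := H _ _ Xu Yv.
by rewrite /f -!payoffG !cx_rx.
Qed.
End Main.

Theorem theorem4 (R : realType) (n m l q : nat)
  (A : 'M[R[i]]_(n, m)) (alpha1 alpha2 : R)
  (B : 'M[R[i]]_(l, n)) (b : 'cV[R]_l)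
  (D : 'M[R[i]]_(q, m)) (d : 'cV[R]_q) :
  1 / Num.sqrt (n%:R) <= alpha1 ->
  1 / Num.sqrt (m%:R) <= alpha2 ->
  (exists u, S1_strict alpha1 B b u) ->
  (exists v, S2_strict alpha2 D d v) ->
  exists ustar vstar,
    [/\ S1 alpha1 B b ustar, S2 alpha2 D d vstar
      & forall u v, S1 alpha1 B b u -> S2 alpha2 D d v ->
          payoff A u vstar <= payoff A ustar vstar /\
          payoff A ustar vstar <= payoff A ustar v].
Proof. exact: theorem4_aux. Qed.
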